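(* The set of axioms $\mathrm{Md}\cup\mathrm{Signs}\cup\mathrm{SquareRoots}$ is a complete axiomatisation of $\mathrm{Mod}_{\Sigma_{mss}}(\mathrm{Md}\cup\mathrm{Signs}\cup\mathrm{SquareRoots}\cup\mathrm{IL})$. That is, an equation between $\Sigma_{mss}$-terms holds in every $\Sigma_{mss}$-algebra satisfying $\mathrm{Md}\cup\mathrm{Signs}\cup\mathrm{SquareRoots}\cup\mathrm{IL}$ if and only if it is derivable in equational logic from $\mathrm{Md}\cup\mathrm{Signs}\cup\mathrm{SquareRoots}$.
   Context: The signature is $\Sigma_{mss}=(0,1,+,\cdot,-,{}^{-1},\mathbf{s},\mathrm{ssqrt})$. Here $\mathbf{s}$ is a unary sign function and $\mathrm{ssqrt}$ is a unary ''signed square root'' operation (written in the paper with a special square-root symbol). $\mathrm{ssqrt}$ is intended to be the principal square root on nonnegative numbers, with $\mathrm{ssqrt}(x)=-\mathrm{ssqrt}(-x)$ for $x<0$. Abbreviations: $1_t$ stands for $t\cdot t^{-1}$ and $0_t$ stands for $1-1_t$. $\mathrm{Md}$ is the set of meadow axioms: - $(x+y)+z=x+(y+z)$, $x+y=y+x$, $x+0=x$, $x+(-x)=0$; - $(x\cdot y)\cdot z=x\cdot(y\cdot z)$, $x\cdot y=y\cdot x$, $1\cdot x=x$; - $x\cdot(y+z)=x\cdot y+x\cdot z$; - $(x^{-1})^{-1}=x$, $x\cdot(x\cdot x^{-1})=x$. $\mathrm{Signs}$ is the set of axioms: - $\mathbf{s}(1_x)=1_x$, $\mathbf{s}(0_x)=0_x$,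 $\mathbf{s}(-1)=-1$; - $\mathbf{s}(x^{-1})=\mathbf{s}(x)$, $\mathbf{s}(x\cdot y)=\mathbf{s}(x)\cdot\mathbf{s}(y)$; - $0_{\mathbf{s}(x)-\mathbf{s}(y)}\cdot(\mathbf{s}(x+y)-\mathbf{s}(x))=0$. $\mathrm{SquareRoots}$ is the set of axioms: - $\mathrm{ssqrt}(x^{-1})=(\mathrm{ssqrt}(x))^{-1}$; - $\mathrm{ssqrt}(x\cdot y)=\mathrm{ssqrt}(x)\cdot\mathrm{ssqrt}(y)$; - $\mathrm{ssqrt}(x\cdot x\cdot\mathbf{s}(x))=x$; - $\mathbf{s}(\mathrm{ssqrt}(x)-\mathrm{ssqrt}(y))=\mathbf{s}(x-y)$. $\mathrm{IL}$ (Inverse Law) is the conditional axiom $x\neq 0\rightarrow x\cdot x^{-1}=1$. $\mathrm{Mod}_\Sigma(T)$ denotes the class of all $\Sigma$-algebras satisfying $T$. *)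

(* Defs.v *)
Inductive term : Type :=
| Var   : nat -> term
| TZero : term
| TOne  : term
| TAdd  : term -> term -> term
| TMul  : term -> term -> term
| TNeg  : term -> term
| TInv  : term -> term
| TSgn  : term -> term
| TSqrt : term -> term.

Record mss_algebra : Type := MkAlg {
  car  : Type;
  zero : car;
  one  : car;
  add  : car -> car -> car;
  mul  : car -> car -> car;
  opp  : car -> car;
  inv  : car -> car;
  sgn  : car -> car;
  ssqrt : car -> car
}.

Fixpoint eval (A : mss_algebra) (env : nat -> car A) (t : term) : car A :=
  match t with
  | Var n => env n
  | TZero => zero A
  | TOne => one A
  | TAdd a b => add A (eval A env a) (eval A env b)
  | TMul a b => mul A (eval A env a) (eval A env b)
  | TNeg a => opp A (eval A env a)
  | TInv a => inv A (eval A env a)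
  | TSgn a => sgn A (eval A env a)
  | TSqrt a => ssqrt A (eval A env a)
  end.

Fixpoint subst (s : nat -> term) (t : term) : term :=
  match t with
  | Var n => s n
  | TZero => TZero
  | TOne => TOne
  | TAdd a b => TAdd (subst s a) (subst s b)
  | TMul a b => TMul (subst s a) (subst s b)
  | TNeg a => TNeg (subst s a)
  | TInv a => TInv (subst s a)
  | TSgn a => TSgn (subst s a)
  | TSqrt a => TSqrt (subst s a)
  end.

Definition vx : term := Var 0.
Definition vy : term := Var 1.
Definition vz : term := Var 2.

Definition tsub (t u : term) : term := TAdd t (TNeg u).
Definition one_ (t : term) : term := TMul t (TInv t).
Definition zero_ (t : term) : term := tsub TOne (one_ t).

Inductive MdSignsSqrt : term -> term -> Prop :=
| md_addA : MdSignsSqrt (TAdd (TAdd vx vy) vz) (TAdd vx (TAdd vy vz))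
| md_addC : MdSignsSqrt (TAdd vx vy) (TAdd vy vx)
| md_add0 : MdSignsSqrt (TAdd vx TZero) vx
| md_addN : MdSignsSqrt (TAdd vx (TNeg vx)) TZero
| md_mulA : MdSignsSqrt (TMul (TMul vx vy) vz) (TMul vx (TMul vy vz))
| md_mulC : MdSignsSqrt (TMul vx vy) (TMul vy vx)
| md_mul1 : MdSignsSqrt (TMul TOne vx) vx
| md_mulD : MdSignsSqrt (TMul vx (TAdd vy vz)) (TAdd (TMul vx vy) (TMul vx vz))
| md_invK : MdSignsSqrt (TInv (TInv vx)) vx
| md_ril  : MdSignsSqrt (TMul vx (TMul vx (TInv vx))) vx
| sg_one  : MdSignsSqrt (TSgn (one_ vx)) (one_ vx)
| sg_zero : MdSignsSqrt (TSgn (zero_ vx)) (zero_ vx)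
| sg_m1   : MdSignsSqrt (TSgn (TNeg TOne)) (TNeg TOne)
| sg_inv  : MdSignsSqrt (TSgn (TInv vx)) (TSgn vx)
| sg_mul  : MdSignsSqrt (TSgn (TMul vx vy)) (TMul (TSgn vx) (TSgn vy))
| sg_add  : MdSignsSqrt
              (TMul (zero_ (tsub (TSgn vx) (TSgn vy)))
                    (tsub (TSgn (TAdd vx vy)) (TSgn vx)))
              TZero
| sq_inv  : MdSignsSqrt (TSqrt (TInv vx)) (TInv (TSqrt vx))
| sq_mul  : MdSignsSqrt (TSqrt (TMul vx vy)) (TMul (TSqrt vx) (TSqrt vy))
| sq_sq   : MdSignsSqrt (TSqrt (TMul (TMul vx vx) (TSgn vx))) vx
| sq_mono : MdSignsSqrt (TSgn (tsub (TSqrt vx) (TSqrt vy))) (TSgn (tsub vx vy)).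

Definition sat_eq (A : mss_algebra) (t u : term) : Prop :=
  forall env : nat -> car A, eval A env t = eval A env u.

Definition IL (A : mss_algebra) : Prop :=
  forall a : car A, a <> zero A -> mul A a (inv A a) = one A.

Definition model_MSS_IL (A : mss_algebra) : Prop :=
  (forall l r, MdSignsSqrt l r -> sat_eq A l r) /\ IL A.

Inductive derivable (E : term -> term -> Prop) : term -> term -> Prop :=
| d_ax    : forall l r (s : nat -> term), E l r -> derivable E (subst s l) (subst s r)
| d_refl  : forall t, derivable E t t
| d_sym   : forall t u, derivable E t u -> derivable E u t
| d_trans : forall t u v, derivable E t u -> derivable E u v -> derivable E t v
| d_add   : forall t t' u u', derivable E t t' -> derivable E u u' ->
              derivable E (TAdd t u) (TAdd t' u')
| d_mul   : forall t t' u u', derivable E t t' -> derivable E u u' ->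
              derivable E (TMul t u) (TMul t' u')
| d_neg   : forall t t', derivable E t t' -> derivable E (TNeg t) (TNeg t')
| d_inv   : forall t t', derivable E t t' -> derivable E (TInv t) (TInv t')
| d_sgn   : forall t t', derivable E t t' -> derivable E (TSgn t) (TSgn t')
| d_sqrt  : forall t t', derivable E t t' -> derivable E (TSqrt t) (TSqrt t').

(* Main.v *)
Require Import Defs.
From Stdlib Require Import FunctionalExtensionality PropExtensionality ProofIrrelevance ClassicalEpsilon Classical.
From Stdlib Require Import Cantor Ring Lia PeanoNat.

Record congr (A : mss_algebra) (R : car A -> car A -> Prop) : Prop := {
  c_refl : forall x, R x x;
  c_sym : forall x y, R x y -> R y x;
  c_trans : forall x y z, R x y -> R y z -> R x z;
  c_add : forall x x' y y', R x x' -> R y y' -> R (add A x y) (add A x' y');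
  c_mul : forall x x' y y', R x x' -> R y y' -> R (mul A x y) (mul A x' y');
  c_opp : forall x x', R x x' -> R (opp A x) (opp A x');
  c_inv : forall x x', R x x' -> R (inv A x) (inv A x');
  c_sgn : forall x x', R x x' -> R (sgn A x) (sgn A x');
  c_sqrt : forall x x', R x x' -> R (ssqrt A x) (ssqrt A x')
}.

Lemma sig_eq_pi (T : Type) (P : T -> Prop) a b pa pb : a = b -> exist P a pa = exist P b pb.
Proof. intros ->. f_equal. apply proof_irrelevance. Qed.

Section Quot.
Variable A : mss_algebra.
Variable R : car A -> car A -> Prop.
Hypothesis HR : congr A R.

Definition qcar := {P : car A -> Prop | exists x, P = R x}.
Definition pi (x : car A) : qcar := exist _ (R x) (ex_intro _ x eq_refl).
Definition rep (q : qcar) : car A :=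
  proj1_sig (constructive_indefinite_description _ (proj2_sig q)).

Lemma pi_rep q : pi (rep q) = q.
Proof.
  destruct q as [P HP]. unfold rep. simpl.
  destruct (constructive_indefinite_description _ HP) as [x Hx]. simpl.
  unfold pi. apply sig_eq_pi. symmetry. exact Hx.
Qed.

Lemma pi_eq x y : pi x = pi y <-> R x y.
Proof.
  split.
  - intro H. apply (f_equal (@proj1_sig _ _)) in H. simpl in H.
    rewrite H. apply (c_refl _ _ HR).
  - intro H. unfold pi. apply sig_eq_pi.
    extensionality z. apply propositional_extensionality. split; intro H'.
    + apply (c_trans _ _ HR) with x; auto. apply (c_sym _ _ HR); auto.
    + apply (c_trans _ _ HR) with y; auto.
Qed.

Lemma R_rep x : R (rep (pi x)) x.
Proof. apply pi_eq. apply pi_rep. Qed.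

Definition QA : mss_algebra :=
  MkAlg qcar (pi (zero A)) (pi (one A))
    (fun a b => pi (add A (rep a) (rep b)))
    (fun a b => pi (mul A (rep a) (rep b)))
    (fun a => pi (opp A (rep a)))
    (fun a => pi (inv A (rep a)))
    (fun a => pi (sgn A (rep a)))
    (fun a => pi (ssqrt A (rep a))).

Lemma eval_pi rho t : eval QA (fun n => pi (rho n)) t = pi (eval A rho t).
Proof.
  induction t; simpl; try reflexivity;
  try (rewrite IHt1, IHt2; apply pi_eq;
       first [apply (c_add _ _ HR) | apply (c_mul _ _ HR)]; apply R_rep);
  try (rewrite IHt; apply pi_eq;
       first [apply (c_opp _ _ HR) | apply (c_inv _ _ HR) | apply (c_sgn _ _ HR)
             | apply (c_sqrt _ _ HR)]; apply R_rep).
Qed.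

Lemma quot_sat l r : (forall rho, R (eval A rho l) (eval A rho r)) -> sat_eq QA l r.
Proof.
  intros H env.
  assert (Henv : env = fun n => pi (rep (env n))).
  { extensionality n. symmetry. apply pi_rep. }
  rewrite Henv, !eval_pi. apply pi_eq, H.
Qed.
End Quot.

Lemma eval_subst A env s t :
  eval A env (subst s t) = eval A (fun n => eval A env (s n)) t.
Proof. induction t; simpl; congruence. Qed.

Lemma soundness t u : derivable MdSignsSqrt t u ->
  forall A, model_MSS_IL A -> sat_eq A t u.
Proof.
  intros D A [HA _]. induction D; intro env; simpl.
  - rewrite !eval_subst. apply HA; auto.
  - reflexivity.
  - symmetry; apply IHD.
  - rewrite (IHD1 env); apply IHD2.
  - rewrite (IHD1 env), (IHD2 env); reflexivity.
  - rewrite (IHD1 env), (IHD2 env); reflexivity.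
  - rewrite (IHD env); reflexivity.
  - rewrite (IHD env); reflexivity.
  - rewrite (IHD env); reflexivity.
  - rewrite (IHD env); reflexivity.
Qed.

Definition TermAlg : mss_algebra := MkAlg term TZero TOne TAdd TMul TNeg TInv TSgn TSqrt.

Lemma eval_term s t : eval TermAlg s t = subst s t.
Proof. induction t; simpl; congruence. Qed.

Lemma subst_var t : subst Var t = t.
Proof. induction t; simpl; congruence. Qed.

Lemma congrD : congr TermAlg (derivable MdSignsSqrt).
Proof.
  constructor; intros; simpl.
  - apply d_refl.
  - apply d_sym; auto.
  - eapply d_trans; eauto.
  - apply d_add; auto.
  - apply d_mul; auto.
  - apply d_neg; auto.
  - apply d_inv; auto.
  - apply d_sgn; auto.
  - apply d_sqrt; auto.
Qed.

Definition Qalg := QA TermAlg (derivable MdSignsSqrt).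

Lemma Qalg_ax l r : MdSignsSqrt l r -> sat_eq Qalg l r.
Proof.
  intros H. apply (quot_sat _ _ congrD). intro rho. rewrite !eval_term. apply d_ax. exact H.
Qed.

Section Model.
Variable A : mss_algebra.
Hypothesis HA : forall l r, MdSignsSqrt l r -> sat_eq A l r.

Local Notation "x ⊕ y" := (add A x y) (at level 50, left associativity).
Local Notation "x ⊗ y" := (mul A x y) (at level 40, left associativity).
Local Notation "⊖ x" := (opp A x) (at level 35).
Local Notation O_ := (zero A).
Local Notation I_ := (one A).

Definition env3 (x y z : car A) : nat -> car A :=
  fun n => match n with 0 => x | 1 => y | _ => z end.

Lemma addC x y : x ⊕ y = y ⊕ x.
Proof. exact (HA _ _ md_addC (env3 x y x)). Qed.
Lemma add0 x : x ⊕ O_ = x.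
Proof. exact (HA _ _ md_add0 (env3 x x x)). Qed.
Lemma addA x y z : x ⊕ y ⊕ z = x ⊕ (y ⊕ z).
Proof. exact (HA _ _ md_addA (env3 x y z)). Qed.
Lemma addN x : x ⊕ ⊖ x = O_.
Proof. exact (HA _ _ md_addN (env3 x x x)). Qed.
Lemma mulC x y : x ⊗ y = y ⊗ x.
Proof. exact (HA _ _ md_mulC (env3 x y x)). Qed.
Lemma mul1 x : I_ ⊗ x = x.
Proof. exact (HA _ _ md_mul1 (env3 x x x)). Qed.
Lemma mulA x y z : x ⊗ y ⊗ z = x ⊗ (y ⊗ z).
Proof. exact (HA _ _ md_mulA (env3 x y z)). Qed.
Lemma mulD x y z : x ⊗ (y ⊕ z) = x ⊗ y ⊕ x ⊗ z.
Proof. exact (HA _ _ md_mulD (env3 x y z)). Qed.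

Lemma Aring : ring_theory O_ I_ (add A) (mul A) (fun x y => x ⊕ ⊖ y) (opp A) eq.
Proof.
  constructor; intros.
  - rewrite addC. apply add0.
  - apply addC.
  - symmetry. apply addA.
  - apply mul1.
  - apply mulC.
  - symmetry. apply mulA.
  - rewrite mulC, mulD, (mulC z x), (mulC z y). reflexivity.
  - reflexivity.
  - apply addN.
Qed.

Add Ring Aring : Aring.

Lemma invK x : inv A (inv A x) = x.
Proof. exact (HA _ _ md_invK (env3 x x x)). Qed.
Lemma ril x : x ⊗ (x ⊗ inv A x) = x.
Proof. exact (HA _ _ md_ril (env3 x x x)). Qed.
Lemma qi1 x : x ⊗ inv A x ⊗ x = x.
Proof. transitivity (x ⊗ (x ⊗ inv A x)); [ring| apply ril]. Qed.
Lemma qi2 x : inv A x ⊗ x ⊗ inv A x = inv A x.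
Proof. transitivity (inv A x ⊗ (inv A x ⊗ inv A (inv A x))); [rewrite invK; ring | apply ril]. Qed.

Lemma uniq_qi x y : x ⊗ y ⊗ x = x -> y ⊗ x ⊗ y = y -> y = inv A x.
Proof.
  intros Hy1 Hy2. set (z := inv A x).
  assert (Hz1 : x ⊗ z ⊗ x = x) by apply qi1.
  assert (Hz2 : z ⊗ x ⊗ z = z) by apply qi2.
  assert (E1 : x ⊗ y = (x ⊗ z) ⊗ (x ⊗ y))
    by (transitivity ((x ⊗ z ⊗ x) ⊗ y); [rewrite Hz1; reflexivity | ring]).
  assert (E2 : x ⊗ z = (x ⊗ y) ⊗ (x ⊗ z))
    by (transitivity ((x ⊗ y ⊗ x) ⊗ z); [rewrite Hy1; reflexivity | ring]).
  assert (E3 : x ⊗ y = x ⊗ z).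
  { transitivity ((x ⊗ z) ⊗ (x ⊗ y)); [exact E1|].
    transitivity ((x ⊗ y) ⊗ (x ⊗ z)); [ring | symmetry; exact E2]. }
  transitivity ((x ⊗ y) ⊗ y); [rewrite <- Hy2 at 1; ring|].
  rewrite E3.
  transitivity (z ⊗ (x ⊗ y)); [ring|]. rewrite E3.
  transitivity (z ⊗ x ⊗ z); [ring| exact Hz2].
Qed.

Lemma inv_mul x y : inv A (x ⊗ y) = inv A x ⊗ inv A y.
Proof.
  symmetry. apply uniq_qi.
  - transitivity ((x ⊗ inv A x ⊗ x) ⊗ (y ⊗ inv A y ⊗ y)); [ring|].
    rewrite !qi1. reflexivity.
  - transitivity ((inv A x ⊗ x ⊗ inv A x) ⊗ (inv A y ⊗ y ⊗ inv A y)); [ring|].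
    rewrite !qi2. reflexivity.
Qed.

Lemma inv_idem e : e ⊗ e = e -> inv A e = e.
Proof.
  intro He. symmetry. apply uniq_qi; rewrite He; exact He.
Qed.

Lemma sgn_idem e : e ⊗ e = e -> sgn A e = e.
Proof.
  intro He. pose proof (HA _ _ sg_one (env3 e e e)) as H. simpl in H.
  rewrite (inv_idem e He), He in H. exact H.
Qed.

Lemma sqrt_idem e : e ⊗ e = e -> ssqrt A e = e.
Proof.
  intro He. pose proof (HA _ _ sq_sq (env3 e e e)) as H. simpl in H.
  rewrite (sgn_idem e He), !He in H. exact H.
Qed.

Lemma sgn_mul x y : sgn A (x ⊗ y) = sgn A x ⊗ sgn A y.
Proof. exact (HA _ _ sg_mul (env3 x y x)). Qed.
Lemma sqrt_mul x y : ssqrt A (x ⊗ y) = ssqrt A x ⊗ ssqrt A y.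
Proof. exact (HA _ _ sq_mul (env3 x y x)). Qed.

Lemma sub_eq0 x y : x ⊕ ⊖ y = O_ -> x = y.
Proof. intro H. transitivity ((x ⊕ ⊖ y) ⊕ y); [ring|]. rewrite H. ring. Qed.

Lemma onep_idem x : x ⊗ inv A x ⊗ (x ⊗ inv A x) = x ⊗ inv A x.
Proof. transitivity ((x ⊗ inv A x ⊗ x) ⊗ inv A x); [ring|]. rewrite qi1. reflexivity. Qed.

Section Constr.
Variable enum : nat -> car A.
Hypothesis Henum : forall x, exists n, enum n = x.
Variable d : car A.
Hypothesis Hd : d <> O_.

Definition onep x := x ⊗ inv A x.

Fixpoint cc (n : nat) : car A :=
  match n with
  | 0 => onep d
  | S n => if excluded_middle_informative (cc n ⊗ (I_ ⊕ ⊖ onep (enum n)) <> O_)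
           then cc n ⊗ (I_ ⊕ ⊖ onep (enum n)) else cc n ⊗ onep (enum n)
  end.

Lemma cc_S n : cc (S n) = cc n ⊗ (I_ ⊕ ⊖ onep (enum n)) \/ cc (S n) = cc n ⊗ onep (enum n).
Proof. simpl. destruct (excluded_middle_informative _); auto. Qed.

Lemma cc_idem n : cc n ⊗ cc n = cc n.
Proof.
  induction n.
  - apply onep_idem.
  - pose proof (onep_idem (enum n)) as Hp. fold (onep (enum n)) in Hp.
    destruct (cc_S n) as [E|E]; rewrite E.
    + transitivity ((cc n ⊗ cc n) ⊗ (I_ ⊕ ⊖ onep (enum n) ⊕ ⊖ onep (enum n) ⊕ onep (enum n) ⊗ onep (enum n))); [ring|].
      rewrite IHn, Hp. ring.
    + transitivity ((cc n ⊗ cc n) ⊗ (onep (enum n) ⊗ onep (enum n))); [ring|].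
      rewrite IHn, Hp. reflexivity.
Qed.

Lemma onep_d_ne0 : onep d <> O_.
Proof. intro H. apply Hd. rewrite <- (ril d). unfold onep in H. rewrite H. ring. Qed.

Lemma cc_ne0 n : cc n <> O_.
Proof.
  induction n.
  - apply onep_d_ne0.
  - simpl. destruct (excluded_middle_informative _) as [h|h]; [exact h|].
    apply NNPP in h. intro E. apply IHn.
    transitivity (cc n ⊗ (I_ ⊕ ⊖ onep (enum n)) ⊕ cc n ⊗ onep (enum n)); [ring|].
    rewrite h, E. ring.
Qed.

Lemma cc_mono n k : n <= k -> exists w, cc k = cc n ⊗ w.
Proof.
  induction 1.
  - exists I_. ring.
  - destruct IHle as [w Hw]. destruct (cc_S m) as [E|E]; rewrite E, Hw.
    + exists (w ⊗ (I_ ⊕ ⊖ onep (enum m))). ring.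
    + exists (w ⊗ onep (enum m)). ring.
Qed.

Definition Rc x y := exists n, (x ⊕ ⊖ y) ⊗ cc n = O_.

Lemma Rc_up a n k : a ⊗ cc n = O_ -> n <= k -> a ⊗ cc k = O_.
Proof.
  intros H Hk. destruct (cc_mono n k Hk) as [w Hw]. rewrite Hw.
  transitivity ((a ⊗ cc n) ⊗ w); [ring|]. rewrite H. ring.
Qed.

Lemma Rc_fun (f : car A -> car A) :
  (forall x n, f (x ⊗ cc n) = f x ⊗ cc n) -> forall x y, Rc x y -> Rc (f x) (f y).
Proof.
  intros Hf x y [n Hn]. exists n.
  assert (E : x ⊗ cc n = y ⊗ cc n).
  { apply sub_eq0. rewrite <- Hn. ring. }
  transitivity (f x ⊗ cc n ⊕ ⊖ (f y ⊗ cc n)); [ring|].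
  rewrite <- !Hf, E. ring.
Qed.

Lemma congrRc : congr A Rc.
Proof.
  constructor.
  - intro x. exists 0. ring.
  - intros x y [n Hn]. exists n. transitivity (⊖ ((x ⊕ ⊖ y) ⊗ cc n)); [ring|].
    rewrite Hn. ring.
  - intros x y z [n Hn] [m Hm]. exists (max n m).
    apply (Rc_up _ n (max n m)) in Hn; [|lia].
    apply (Rc_up _ m (max n m)) in Hm; [|lia].
    transitivity ((x ⊕ ⊖ y) ⊗ cc (max n m) ⊕ (y ⊕ ⊖ z) ⊗ cc (max n m)); [ring|].
    rewrite Hn, Hm. ring.
  - intros x x' y y' [n Hn] [m Hm]. exists (max n m).
    apply (Rc_up _ n (max n m)) in Hn; [|lia].
    apply (Rc_up _ m (max n m)) in Hm; [|lia].
    transitivity ((x ⊕ ⊖ x') ⊗ cc (max n m) ⊕ (y ⊕ ⊖ y') ⊗ cc (max n m)); [ring|].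
    rewrite Hn, Hm. ring.
  - intros x x' y y' [n Hn] [m Hm]. exists (max n m).
    apply (Rc_up _ n (max n m)) in Hn; [|lia].
    apply (Rc_up _ m (max n m)) in Hm; [|lia].
    transitivity (y ⊗ ((x ⊕ ⊖ x') ⊗ cc (max n m)) ⊕ x' ⊗ ((y ⊕ ⊖ y') ⊗ cc (max n m))); [ring|].
    rewrite Hn, Hm. ring.
  - apply Rc_fun. intros. ring.
  - apply Rc_fun. intros. rewrite inv_mul, (inv_idem _ (cc_idem n)). reflexivity.
  - apply Rc_fun. intros. rewrite sgn_mul, (sgn_idem _ (cc_idem n)). reflexivity.
  - apply Rc_fun. intros. rewrite sqrt_mul, (sqrt_idem _ (cc_idem n)). reflexivity.
Qed.

Definition KA := QA A Rc.

Lemma KA_model : model_MSS_IL KA.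
Proof.
  split.
  - intros l r H. apply (quot_sat _ _ congrRc). intro rho.
    rewrite (HA _ _ H rho). apply (c_refl _ _ congrRc).
  - intros a Ha. rewrite <- (pi_rep _ _ a) in *. set (x := rep A Rc a) in *.
    simpl. apply (pi_eq _ _ congrRc).
    apply (c_trans _ _ congrRc) with (x ⊗ inv A x).
    { apply (c_mul _ _ congrRc); [apply (R_rep _ _ congrRc)|].
      apply (c_trans _ _ congrRc) with (inv A (rep A Rc (pi A Rc x))); [apply (R_rep _ _ congrRc)|].
      apply (c_inv _ _ congrRc). apply (R_rep _ _ congrRc). }
    destruct (Henum x) as [n Hn].
    pose proof (onep_idem x) as Hp.
    destruct (cc_S n) as [E|E]; rewrite Hn in E.
    + exfalso. apply Ha. simpl. apply (pi_eq _ _ congrRc).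
      exists (S n). rewrite E. unfold onep.
      transitivity (cc n ⊗ (x ⊕ ⊖ (x ⊗ (x ⊗ inv A x)))); [ring|].
      rewrite ril. ring.
    + exists (S n). rewrite E. unfold onep.
      transitivity (cc n ⊗ (x ⊗ inv A x ⊗ (x ⊗ inv A x) ⊕ ⊖ (x ⊗ inv A x))); [ring|].
      rewrite Hp. ring.
Qed.

Lemma d_not_R n : d ⊗ cc n <> O_.
Proof.
  intro H. apply (cc_ne0 n).
  destruct (cc_mono 0 n ltac:(lia)) as [w Hw]. simpl in Hw.
  assert (Hdw : d ⊗ w = O_).
  { rewrite Hw in H. unfold onep in H. rewrite <- H.
    transitivity ((d ⊗ (d ⊗ inv A d)) ⊗ w); [|ring]. rewrite ril. reflexivity. }
  rewrite Hw. unfold onep.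
  transitivity (inv A d ⊗ (d ⊗ w)); [ring|]. rewrite Hdw. ring.
Qed.

End Constr.
End Model.

Fixpoint decode_f (f : nat) (n : nat) : term :=
  match f with
  | 0 => TZero
  | S f =>
    let (tag, p) := Cantor.of_nat n in
    let (a, b) := Cantor.of_nat p in
    match tag with
    | 0 => Var p
    | 1 => TZero
    | 2 => TOne
    | 3 => TAdd (decode_f f a) (decode_f f b)
    | 4 => TMul (decode_f f a) (decode_f f b)
    | 5 => TNeg (decode_f f p)
    | 6 => TInv (decode_f f p)
    | 7 => TSgn (decode_f f p)
    | _ => TSqrt (decode_f f p)
    end
  end.

Fixpoint encode (t : term) : nat :=
  match t with
  | Var n => Cantor.to_nat (0, n)
  | TZero => Cantor.to_nat (1, 0)
  | TOne => Cantor.to_nat (2, 0)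
  | TAdd a b => Cantor.to_nat (3, Cantor.to_nat (encode a, encode b))
  | TMul a b => Cantor.to_nat (4, Cantor.to_nat (encode a, encode b))
  | TNeg a => Cantor.to_nat (5, encode a)
  | TInv a => Cantor.to_nat (6, encode a)
  | TSgn a => Cantor.to_nat (7, encode a)
  | TSqrt a => Cantor.to_nat (8, encode a)
  end.

Fixpoint depth (t : term) : nat :=
  match t with
  | TAdd a b | TMul a b => S (max (depth a) (depth b))
  | TNeg a | TInv a | TSgn a | TSqrt a => S (depth a)
  | _ => 0
  end.

Lemma decode_encode t k : depth t < k -> decode_f k (encode t) = t.
Proof.
  revert k. induction t; intros k Hk; destruct k as [|k]; try (simpl in Hk; lia);
  cbn [decode_f encode]; rewrite Cantor.cancel_of_to;
  try (destruct (Cantor.of_nat _); reflexivity);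
  try (rewrite Cantor.cancel_of_to; simpl in Hk;
       rewrite IHt1, IHt2 by lia; reflexivity);
  try (destruct (Cantor.of_nat _); simpl in Hk; rewrite IHt by lia; reflexivity).
Qed.

Definition enum_term (n : nat) : term :=
  let (f, c) := Cantor.of_nat n in decode_f f c.

Lemma enum_term_surj t : exists n, enum_term n = t.
Proof.
  exists (Cantor.to_nat (S (depth t), encode t)). unfold enum_term.
  rewrite Cantor.cancel_of_to. apply decode_encode. lia.
Qed.

Theorem mainTheorem1 (t u : term) :
  (forall A : mss_algebra, model_MSS_IL A -> sat_eq A t u) <->
  derivable MdSignsSqrt t u.
Proof.
  split; [|intros; eapply soundness; eauto].
  intro H. apply NNPP. intro ND.
  set (piQ := pi TermAlg (derivable MdSignsSqrt)).
  set (enumQ := fun n => piQ (enum_term n)).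
  assert (HenumQ : forall x, exists n, enumQ n = x).
  { intro x. destruct (enum_term_surj (rep _ _ x)) as [n Hn]. exists n.
    unfold enumQ, piQ. rewrite Hn. apply pi_rep. }
  set (d := add Qalg (piQ t) (opp Qalg (piQ u))).
  assert (Hd : d <> zero Qalg).
  { intro E. apply ND. apply (pi_eq _ _ congrD). apply (sub_eq0 Qalg Qalg_ax). exact E. }
  pose proof (KA_model Qalg Qalg_ax enumQ HenumQ d) as HK.
  specialize (H _ HK (fun n => pi Qalg (Rc Qalg enumQ d) (piQ (Var n)))).
  rewrite !(eval_pi Qalg (Rc Qalg enumQ d) (congrRc Qalg Qalg_ax enumQ d)) in H.
  unfold piQ in H.
  rewrite !(eval_pi TermAlg _ congrD) in H.
  rewrite !eval_term, !subst_var in H.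
  apply (pi_eq _ _ (congrRc Qalg Qalg_ax enumQ d)) in H.
  destruct H as [n Hn].
  exact (d_not_R Qalg Qalg_ax enumQ d Hd n Hn).
Qed.
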